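(* Let $a\in\mathbb Z_{>0}$, $b\in\mathbb Z$ with $a+b\ge1$. Let $z,q\in\mathbb C$, let $\alpha_1,\ldots,\alpha_m$ be words, and let $e_1,\ldots,e_m\in\mathbb Z_{\ge0}$. Then for every positive integer $k$, \[ S(k)=\sum_{n=1}^{k}z^n(an+b)^q\prod_{j=1}^{m}\mathcal H_{\alpha_j}(an+b)^{e_j} \] belongs to $\operatorname{span}_{\mathbb C}\{\mathcal H_\beta(ak+b)\}_\beta$, where $\beta$ ranges over words; i.e. $S(k)$ is a finite linear combination of generalized harmonic numbers with upper limit $ak+b$.
   Context: A letter is a pair $(r,s)\in\mathbb C^2$ and a word is a finite sequence of letters. For a word $\alpha=((r_1,s_1),\ldots,(r_d,s_d))$ and a positive integer $N$, \[ \mathcal H_{\alpha}(N)=\sum_{N\ge n_1>\cdots>n_d\ge1}\prod_{i=1}^{d}\frac{s_i^{n_i}}{n_i^{r_i}},\qquad \mathcal H_\emptyset(N)=1, \] with powers of positive integers defined by $n^r=\exp(r\log n)$ using the real logarithm (so $(an+b)^q$ uses the real logarithm of the positive integer $an+b$). *)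

(* Defs.v *)
From Stdlib Require Import Reals ZArith List.
From Coquelicot Require Import Coquelicot.
Import ListNotations.
Open Scope R_scope.

(* n^r := exp(r * ln n) for a positive integer n and complex r, with the real
   logarithm: exp((x+iy) ln n) = exp(x ln n) (cos(y ln n) + i sin(y ln n)). *)
Definition npow (n : nat) (r : C) : C :=
  (exp (fst r * ln (INR n)) * cos (snd r * ln (INR n)),
   exp (fst r * ln (INR n)) * sin (snd r * ln (INR n))).

Definition letter := (C * C)%type.
Definition word := list letter.

Fixpoint csum1 (N : nat) (f : nat -> C) : C :=
  match N with
  | O => RtoC 0
  | S N' => Cplus (csum1 N' f) (f (S N'))
  end.

(* H_alpha(N) = sum_{N >= n_1 > ... > n_d >= 1} prod_i s_i^{n_i} / n_i^{r_i},
   computed recursively on the first letter: H_[] = 1,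
   H_{(r,s)::alpha}(N) = sum_{n=1}^{N} s^n / n^r * H_alpha(n-1). *)
Fixpoint H (alpha : word) (N : nat) : C :=
  match alpha with
  | [] => RtoC 1
  | (r, s) :: alpha' =>
      csum1 N (fun n => Cmult (Cdiv (Cpow s n) (npow n r)) (H alpha' (n - 1)))
  end.

Fixpoint cprod (m : nat) (g : nat -> C) : C :=
  match m with
  | O => RtoC 1
  | S m' => Cmult (cprod m' g) (g m')
  end.

Fixpoint lincomb (l : list (C * word)) (N : nat) : C :=
  match l with
  | [] => RtoC 0
  | (c, beta) :: l' => Cplus (Cmult c (H beta N)) (lincomb l' N)
  end.

Definition Ssum (a b : Z) (z q : C) (m : nat) (alpha : nat -> word)
  (e : nat -> nat) (k : nat) : C :=
  csum1 k (fun n =>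
    let N := Z.to_nat (a * Z.of_nat n + b)%Z in
    Cmult (Cmult (Cpow z n) (npow N q))
          (cprod m (fun j => Cpow (H (alpha j) N) (e j)))).

(* Main.v *)
Require Import Defs.
From Stdlib Require Import Reals ZArith List Lra Lia.
From Coquelicot Require Import Coquelicot.
Import ListNotations.
Open Scope C_scope.

Lemma npow_nz n r : npow n r <> 0.
Proof.
  unfold npow. intro Hc. injection Hc as H1 H2.
  pose proof (exp_pos (fst r * ln (INR n))) as He.
  pose proof (sin2_cos2 (snd r * ln (INR n))) as Hsc.
  apply Rmult_integral in H1. apply Rmult_integral in H2.
  destruct H1 as [H1|H1]; [lra|]. destruct H2 as [H2|H2]; [lra|].
  unfold Rsqr in Hsc. rewrite H1, H2 in Hsc. lra.
Qed.

Lemma npow_add n r1 r2 : npow n (r1 + r2) = npow n r1 * npow n r2.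
Proof.
  destruct r1 as [x1 y1], r2 as [x2 y2]. unfold npow, Cmult; simpl.
  rewrite !Rmult_plus_distr_r, exp_plus, cos_plus, sin_plus.
  f_equal; ring.
Qed.

Lemma npow_0 n : npow n 0 = 1.
Proof.
  unfold npow; simpl. rewrite !Rmult_0_l, exp_0, cos_0, sin_0.
  unfold RtoC; f_equal; ring.
Qed.

Lemma csum1_ext N f g : (forall n, (1 <= n <= N)%nat -> f n = g n) ->
  csum1 N f = csum1 N g.
Proof.
  induction N; intros Hfg; simpl; auto.
  f_equal; [apply IHN; intros; apply Hfg; lia | apply Hfg; lia].
Qed.

Lemma csum1_plus N f g : csum1 N (fun n => f n + g n) = csum1 N f + csum1 N g.
Proof. induction N; simpl. ring. rewrite IHN. ring. Qed.

Lemma csum1_scal N c f : csum1 N (fun n => c * f n) = c * csum1 N f.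
Proof. induction N; simpl. ring. rewrite IHN. ring. Qed.

Lemma csum1_zero N : csum1 N (fun _ => 0) = 0.
Proof. induction N; simpl. ring. rewrite IHN. ring. Qed.

Fixpoint sumz (n : nat) (f : nat -> C) : C :=
  match n with O => 0 | S n' => sumz n' f + f n' end.

Lemma sumz_ext n f g : (forall i, (i < n)%nat -> f i = g i) -> sumz n f = sumz n g.
Proof.
  induction n; intros Hfg; simpl; auto.
  f_equal; [apply IHn; intros; apply Hfg; lia | apply Hfg; lia].
Qed.

Lemma sumz_add m d f : sumz (m + d) f = sumz m f + sumz d (fun i => f (m + i)%nat).
Proof.
  induction d; simpl. rewrite Nat.add_0_r. ring.
  rewrite Nat.add_succ_r. simpl. rewrite IHd. ring.
Qed.

Lemma sumz_scal n c f : sumz n (fun i => c * f i) = c * sumz n f.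
Proof. induction n; simpl. ring. rewrite IHn. ring. Qed.

Lemma sumz_zero n : sumz n (fun _ => 0) = 0.
Proof. induction n; simpl. ring. rewrite IHn. ring. Qed.

Lemma csum1_sumz N f : csum1 N f = sumz N (fun i => f (S i)).
Proof. induction N; simpl; auto. rewrite IHN. auto. Qed.

Lemma csum1_add M d f : csum1 (M + d) f = csum1 M f + csum1 d (fun j => f (M + j)%nat).
Proof.
  induction d; simpl. rewrite Nat.add_0_r. ring.
  rewrite Nat.add_succ_r. simpl. rewrite IHd. ring.
Qed.

Definition Vmem (f : nat -> C) := exists l, forall N, f N = lincomb l N.

Lemma lincomb_app l1 l2 N : lincomb (l1 ++ l2) N = lincomb l1 N + lincomb l2 N.
Proof. induction l1 as [|[c b] l1 IH]; simpl. ring. rewrite IH. ring. Qed.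

Lemma Vmem_ext f g : (forall N, f N = g N) -> Vmem f -> Vmem g.
Proof. intros E [l Hl]. exists l. intros N. rewrite <- E. auto. Qed.

Lemma Vmem_add f g : Vmem f -> Vmem g -> Vmem (fun N => f N + g N).
Proof.
  intros [l1 H1] [l2 H2]. exists (l1 ++ l2). intros N.
  rewrite lincomb_app, H1, H2. auto.
Qed.

Lemma Vmem_scal c f : Vmem f -> Vmem (fun N => c * f N).
Proof.
  intros [l H1]. exists (map (fun p => (c * fst p, snd p)) l). intros N.
  rewrite H1. clear H1. induction l as [|[d b] l IH]; simpl. ring.
  rewrite <- IH. ring.
Qed.

Lemma Vmem_zero : Vmem (fun _ => 0).
Proof. exists []. auto. Qed.

Lemma Vmem_H b : Vmem (H b).
Proof. exists [(RtoC 1, b)]. intros N. simpl. ring. Qed.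

Lemma Vmem_one : Vmem (fun _ => 1).
Proof. exists [(RtoC 1, [])]. intros N. simpl. ring. Qed.

Fixpoint Wval (l : list (C * C * C * word)) (n : nat) : C :=
  match l with
  | [] => 0
  | (c, r, s, b) :: l' => c * (Cdiv (Cpow s n) (npow n r) * H b (n - 1)) + Wval l' n
  end.

Lemma Wval_app l1 l2 n : Wval (l1 ++ l2) n = Wval l1 n + Wval l2 n.
Proof. induction l1 as [|[[[c r] s] b] l1 IH]; simpl. ring. rewrite IH. ring. Qed.

Definition Wmem (g : nat -> C) := exists l, forall n, (1 <= n)%nat -> g n = Wval l n.

Lemma sigma_lemma g : Wmem g -> Vmem (fun N => csum1 N g).
Proof.
  intros [l Hl]. exists (map (fun '(c, r, s, b) => (c, (r, s) :: b)) l).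
  intros N. rewrite (csum1_ext N g (Wval l)) by (intros; apply Hl; lia).
  clear Hl. induction l as [|[[[c r] s] b] l IH]; simpl.
  - apply csum1_zero.
  - rewrite csum1_plus, csum1_scal, IH. reflexivity.
Qed.

Lemma Wmem_ext f g : (forall n, (1 <= n)%nat -> f n = g n) -> Wmem f -> Wmem g.
Proof. intros E [l Hl]. exists l. intros n Hn. rewrite <- E; auto. Qed.

Lemma Wmem_add f g : Wmem f -> Wmem g -> Wmem (fun n => f n + g n).
Proof.
  intros [l1 H1] [l2 H2]. exists (l1 ++ l2). intros n Hn.
  rewrite Wval_app, H1, H2; auto.
Qed.

Lemma Wmem_zero : Wmem (fun _ => 0).
Proof. exists []. auto. Qed.

Lemma Wmem_mono c t q f : Wmem f ->
  Wmem (fun n => c * Cpow t n * npow n q * f n).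
Proof.
  intros [l Hl]. exists (map (fun '(d, r, s, b) => (c * d, r - q, s * t, b)) l).
  intros n Hn. rewrite Hl by auto. clear Hl.
  induction l as [|[[[d r] s] b] l IH]; simpl. ring.
  rewrite <- IH. rewrite Cpow_mult_l.
  assert (E : npow n r = npow n (r - q) * npow n q).
  { rewrite <- npow_add. f_equal. ring. }
  rewrite E. field. split; apply npow_nz.
Qed.

Lemma Wmem_sumz A (G : nat -> nat -> C) :
  (forall j, Wmem (G j)) -> Wmem (fun n => sumz A (fun j => G j n)).
Proof.
  intros HG. induction A; simpl.
  - apply Wmem_zero.
  - apply Wmem_add; auto.
Qed.

Lemma H_cons_S r s b m :
  H (@cons letter (r, s) b) (S m) = H (@cons letter (r, s) b) m + Cdiv (Cpow s (S m)) (npow (S m) r) * H b m.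
Proof. simpl. rewrite Nat.sub_0_r. reflexivity. Qed.

Lemma VtoW f : Vmem f -> Wmem f.
Proof.
  intros [l Hl]. apply (Wmem_ext (lincomb l)); [intros; symmetry; auto|].
  clear Hl f. induction l as [|[c b] l IH]; simpl.
  - apply Wmem_zero.
  - apply Wmem_add; auto.
    destruct b as [|[r s] b'].
    + exists [(c, RtoC 0, RtoC 1, [])]. intros n Hn. simpl.
      rewrite Cpow_1_l, npow_0. field.
    + exists [(c, RtoC 0, RtoC 1, @cons letter (r, s) b'); (c, r, s, b')]. intros n Hn.
      destruct n as [|m]; [lia|]. cbn [Wval].
      replace (S m - 1)%nat with m by lia.
      rewrite Cpow_1_l, npow_0, H_cons_S. field. apply npow_nz.
Qed.

Lemma mono_lemma r s l n :
  Cdiv (Cpow s n) (npow n r) * lincomb l (n - 1) =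
  Wval (map (fun '(c, g) => (c, r, s, g)) l) n.
Proof. induction l as [|[c g] l IH]; simpl. ring. rewrite <- IH. ring. Qed.

Lemma HH_mem d : forall a b, (length a + length b <= d)%nat ->
  Vmem (fun N => H a N * H b N).
Proof.
  induction d as [|d IH]; intros a b Hd.
  - destruct a; [|simpl in Hd; lia]. destruct b; [|simpl in Hd; lia].
    apply (Vmem_ext (fun _ => 1)); [intros; simpl; ring| apply Vmem_one].
  - destruct a as [|[r s] a'].
    + apply (Vmem_ext (H b)); [intros; simpl; ring| apply Vmem_H].
    + destruct b as [|[r' s'] b'].
      * apply (Vmem_ext (H ((r, s) :: a'))); [intros; simpl; ring| apply Vmem_H].
      * simpl in Hd.
        destruct (IH a' ((r', s') :: b')) as [l1 H1]; [simpl; lia|].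
        destruct (IH ((r, s) :: a') b') as [l2 H2]; [simpl; lia|].
        destruct (IH a' b') as [l3 H3]; [lia|].
        set (WL := map (fun '(c, g) => (c, r, s, g)) l1 ++
                   map (fun '(c, g) => (c, r', s', g)) l2 ++
                   map (fun '(c, g) => (c, r + r', s * s', g)) l3).
        apply (Vmem_ext (fun N => csum1 N (Wval WL))).
        2:{ apply sigma_lemma. exists WL. auto. }
        intros N. symmetry. induction N as [|N IHN].
        -- simpl. ring.
        -- rewrite !H_cons_S. simpl csum1 at 1. rewrite <- IHN.
           unfold WL. rewrite !Wval_app, <- !mono_lemma.
           replace (S N - 1)%nat with N by lia.
           rewrite <- H1, <- H2, <- H3.
           rewrite Cpow_mult_l, npow_add.
           change (H (@cons (prod C C) (r', s') b') N) with (H (@cons letter (r', s') b') N).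
           change (H (@cons (prod C C) (r, s) a') N) with (H (@cons letter (r, s) a') N).
           pose proof (npow_nz (S N) r) as Hn1; pose proof (npow_nz (S N) r') as Hn2. revert Hn1 Hn2. generalize (Cpow s (S N)) (Cpow s' (S N)) (npow (S N) r) (npow (S N) r') (H a' N) (H b' N) (H (@cons letter (r, s) a') N) (H (@cons letter (r', s') b') N). intros. field. tauto.
Qed.

Lemma Vmem_mul f g : Vmem f -> Vmem g -> Vmem (fun N => f N * g N).
Proof.
  intros [l1 H1] [l2 H2].
  apply (Vmem_ext (fun N => lincomb l1 N * lincomb l2 N)).
  { intros; rewrite H1, H2; auto. }
  clear H1 H2. induction l1 as [|[c a] l1 IH]; simpl.
  - apply (Vmem_ext (fun _ => 0)); [intros; ring| apply Vmem_zero].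
  - apply (Vmem_ext (fun N => c * (H a N * lincomb l2 N) + lincomb l1 N * lincomb l2 N)).
    { intros; ring. }
    apply Vmem_add; auto. apply Vmem_scal.
    clear IH. induction l2 as [|[d b] l2 IH2]; simpl.
    + apply (Vmem_ext (fun _ => 0)); [intros; ring| apply Vmem_zero].
    + apply (Vmem_ext (fun N => d * (H a N * H b N) + H a N * lincomb l2 N)).
      { intros; ring. }
      apply Vmem_add; auto. apply Vmem_scal. apply (HH_mem (length a + length b) a b). lia.
Qed.

Lemma Vmem_prod m (alpha : nat -> word) (e : nat -> nat) :
  Vmem (fun N => cprod m (fun j => Cpow (H (alpha j) N) (e j))).
Proof.
  induction m; simpl.
  - apply Vmem_one.
  - apply Vmem_mul; auto.
    induction (e m) as [|k IHk]; simpl.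
    + apply Vmem_one.
    + apply Vmem_mul; auto. apply Vmem_H.
Qed.

Lemma demoivre rho phi n :
  Cpow ((rho * cos phi)%R, (rho * sin phi)%R) n =
  ((rho ^ n * cos (INR n * phi))%R, (rho ^ n * sin (INR n * phi))%R).
Proof.
  induction n as [|n IH].
  - simpl. rewrite Rmult_0_l, cos_0, sin_0. unfold RtoC. f_equal; ring.
  - rewrite Cpow_S, IH, S_INR. unfold Cmult; cbn [fst snd pow].
    replace ((INR n + 1) * phi)%R with (phi + INR n * phi)%R by ring.
    rewrite cos_plus, sin_plus. f_equal; ring.
Qed.

Lemma exp_pow x n : (exp x ^ n = exp (INR n * x))%R.
Proof.
  induction n as [|n IH]; simpl.
  - rewrite Rmult_0_l, exp_0. auto.
  - rewrite IH. rewrite <- exp_plus. f_equal. destruct n; simpl; ring.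
Qed.

Lemma root_exists A z : (0 < A)%nat -> exists w, Cpow w A = z.
Proof.
  intros HA.
  destruct (Ceq_dec z 0) as [Hz|Hz].
  { exists 0. subst. destruct A; [lia|]. simpl. ring. }
  assert (Hrho : (0 < Cmod z)%R) by (apply Cmod_gt_0; auto).
  set (rho := Cmod z) in *.
  destruct z as [x y].
  assert (Hr2 : (rho ^ 2 = x ^ 2 + y ^ 2)%R) by (unfold rho; rewrite Cmod2_alt; auto).
  set (u := (x / rho)%R).
  assert (Hu : (-1 <= u <= 1)%R).
  { pose proof (re_le_Cmod (x, y)) as Hx. simpl in Hx. fold rho in Hx.
    unfold u. assert (Hx' : (- rho <= x <= rho)%R) by (pose proof (Rabs_maj2 x); pose proof (Rle_abs x); lra). clear Hx. rename Hx' into Hx. split.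
    - apply (Rmult_le_reg_r rho); auto. unfold Rdiv. rewrite Rmult_assoc, Rinv_l; lra.
    - apply (Rmult_le_reg_r rho); auto. unfold Rdiv. rewrite Rmult_assoc, Rinv_l; lra. }
  assert (Hs : (rho * sqrt (1 - u²) = Rabs y)%R).
  { assert (E : (1 - u² = Rsqr (y / rho))%R).
    { unfold u, Rsqr. field_simplify_eq; [|lra]. simpl in Hr2. nra. }
    rewrite E, sqrt_Rsqr_abs, Rabs_div by lra. rewrite (Rabs_pos_eq rho) by lra.
    field. lra. }
  set (theta := if Rle_dec 0 y then acos u else (- acos u)%R).
  assert (Hpol : (x, y) = ((rho * cos theta)%R, (rho * sin theta)%R)).
  { unfold theta. destruct (Rle_dec 0 y) as [Hy|Hy].
    - rewrite cos_acos, sin_acos by auto. rewrite Hs, Rabs_pos_eq by auto.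
      unfold u. f_equal. field. lra.
    - rewrite cos_neg, sin_neg, cos_acos, sin_acos by auto.
      replace (rho * - sqrt (1 - u²))%R with (- (rho * sqrt (1 - u²)))%R by ring.
      rewrite Hs, Rabs_left by lra. unfold u. f_equal; [field; lra| ring]. }
  assert (HAr : INR A <> 0%R) by (apply not_0_INR; lia).
  exists ((exp (ln rho / INR A) * cos (theta / INR A))%R,
          (exp (ln rho / INR A) * sin (theta / INR A))%R).
  rewrite demoivre, exp_pow, Hpol.
  replace (INR A * (ln rho / INR A))%R with (ln rho) by (field; auto).
  replace (INR A * (theta / INR A))%R with theta by (field; auto).
  rewrite exp_ln by auto. auto.
Qed.

Lemma cos_lt_1 t : (0 < t < 2 * PI)%R -> (cos t < 1)%R.
Proof.
  intros Ht.
  replace t with (2 * (t / 2))%R by field.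
  rewrite cos_2a_sin.
  assert (0 < sin (t / 2))%R by (apply sin_gt_0; lra).
  nra.
Qed.

Lemma geom x n : (x - 1) * sumz n (fun j => Cpow x j) = Cpow x n - 1.
Proof.
  induction n as [|n IH]; simpl. ring.
  rewrite Cmult_plus_distr_l, IH. ring.
Qed.

Lemma sumz_one n : sumz n (fun _ => 1) = RtoC (INR n).
Proof.
  induction n as [|n IH]; simpl sumz. reflexivity.
  rewrite IH, S_INR. unfold RtoC, Cplus. simpl. f_equal; ring.
Qed.

Lemma unity A : (0 < A)%nat -> exists om : C, om <> 0 /\ forall m,
  sumz A (fun j => Cpow (Cpow om j) m) =
  if Nat.eqb (m mod A) 0 then RtoC (INR A) else 0.
Proof.
  intros HA.
  assert (HAr : (0 < INR A)%R) by (apply lt_0_INR; lia).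
  set (th := (2 * PI / INR A)%R).
  set (om := ((1 * cos th)%R, (1 * sin th)%R)).
  assert (HomA : Cpow om A = 1).
  { unfold om. rewrite demoivre. unfold th.
    replace (INR A * (2 * PI / INR A))%R with (2 * PI)%R by (field; lra).
    rewrite cos_2PI, sin_2PI, pow1. unfold RtoC. f_equal; ring. }
  exists om. split.
  { intro E. rewrite E in HomA. destruct A; [lia|]. simpl in HomA.
    rewrite Cmult_0_l in HomA. injection HomA. lra. }
  intros m.
  assert (Hsw : forall j, Cpow (Cpow om j) m = Cpow (Cpow om m) j).
  { intros j. rewrite <- !Cpow_mult_r, Nat.mul_comm. auto. }
  rewrite (sumz_ext A _ (fun j => Cpow (Cpow om m) j)) by (intros; apply Hsw).
  assert (Hm : Cpow om m = Cpow om (m mod A)).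
  { rewrite (Nat.div_mod_eq m A) at 1.
    rewrite Cpow_add_r, Cpow_mult_r, HomA, Cpow_1_l. ring. }
  rewrite Hm.
  destruct (Nat.eqb_spec (m mod A) 0) as [E|E].
  - rewrite E. simpl Cpow. rewrite (sumz_ext A _ (fun _ => 1)) by (intros; apply Cpow_1_l).
    apply sumz_one.
  - set (x := Cpow om (m mod A)).
    assert (Hx1 : x <> 1).
    { unfold x, om. rewrite demoivre. intro Hc. injection Hc as Hc1 Hc2.
      rewrite pow1 in Hc1.
      assert (Hlt : (m mod A < A)%nat) by (apply Nat.mod_upper_bound; lia).
      assert (Hpos : (0 < m mod A)%nat) by lia.
      assert (H1 : (0 < INR (m mod A))%R) by (apply lt_0_INR; lia).
      assert (H2 : (INR (m mod A) < INR A)%R) by (apply lt_INR; lia).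
      assert (cos (INR (m mod A) * th) < 1)%R.
      { apply cos_lt_1. unfold th. split.
        - apply Rmult_lt_0_compat; auto. apply Rdiv_lt_0_compat; auto. pose proof PI_RGT_0; lra.
        - apply (Rmult_lt_reg_r (INR A)); auto.
          replace (INR (m mod A) * (2 * PI / INR A) * INR A)%R with (INR (m mod A) * (2 * PI))%R by (field; lra).
          pose proof PI_RGT_0. nra. }
      lra. }
    assert (HxA : Cpow x A = 1).
    { unfold x. rewrite <- Cpow_mult_r, Nat.mul_comm, Cpow_mult_r, HomA. apply Cpow_1_l. }
    pose proof (geom x A) as G. rewrite HxA in G.
    assert (Hx0 : x - 1 <> 0) by (intro Hc; apply Hx1; 
      replace x with ((x - 1) + 1) by ring; rewrite Hc; ring).
    transitivity (/ (x - 1) * ((x - 1) * sumz A (fun j => Cpow x j))).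
    { field. auto. }
    rewrite G. ring.
Qed.

Lemma lincomb_scal z l N :
  lincomb (map (fun p => (z * fst p, snd p)) l) N = z * lincomb l N.
Proof. induction l as [|[d b] l IH]; simpl. ring. rewrite IH. ring. Qed.

Lemma sumz_mul_r n f c : sumz n f * c = sumz n (fun i => f i * c).
Proof. induction n; simpl. ring. rewrite <- IHn. ring. Qed.

Lemma Cmult_nz (x y : C) : x <> 0 -> y <> 0 -> x * y <> 0.
Proof.
  intros Hx Hy. apply (proj2 (Cmod_gt_0 (x * y))). rewrite Cmod_mult.
  apply Rmult_lt_0_compat; apply (proj1 (Cmod_gt_0 _)); auto.
Qed.

Theorem theorem3p3 (a b : Z) (z q : C) (m : nat) (alpha : nat -> word)
  (e : nat -> nat) (Ha : (0 < a)%Z) (Hab : (1 <= a + b)%Z) :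
  exists l : list (C * word),
    forall k : nat, (1 <= k)%nat ->
      Ssum a b z q m alpha e k = lincomb l (Z.to_nat (a * Z.of_nat k + b)%Z).
Proof.
  set (A := Z.to_nat a). set (Bp := Z.to_nat (a + b)).
  assert (HA : (0 < A)%nat) by (unfold A; lia).
  assert (HB : (1 <= Bp)%nat) by (unfold Bp; lia).
  assert (HN : forall k, (1 <= k)%nat -> Z.to_nat (a * Z.of_nat k + b) = (A * (k - 1) + Bp)%nat)
    by (intros; unfold A, Bp; nia).
  set (P := fun n => cprod m (fun j => Cpow (H (alpha j) n) (e j))).
  set (F := fun n => npow n q * P n).
  destruct (Ceq_dec z 0) as [Hz|Hz].
  { exists []. intros k Hk. unfold Ssum. simpl lincomb.
    rewrite (csum1_ext k _ (fun _ => 0)); [apply csum1_zero|].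
    intros n Hn. destruct n; [lia|]. rewrite Hz. simpl Cpow. ring. }
  destruct (root_exists A z HA) as [w Hw].
  assert (Hw0 : w <> 0).
  { intro E. apply Hz. rewrite <- Hw, E. destruct A; [lia|]. simpl. ring. }
  destruct (unity A HA) as [om [Hom Hsum]].
  set (t := fun j => Cpow om j * w).
  assert (Ht : forall j, Cpow (t j) Bp <> 0).
  { intros j. apply Cpow_nz. apply Cmult_nz; auto. apply Cpow_nz; auto. }
  set (K := fun j => / Cpow (t j) Bp).
  set (phi := fun n => / RtoC (INR A) * sumz A (fun j => K j * Cpow (t j) n)).
  assert (HAr : RtoC (INR A) <> 0).
  { intro E. injection E. apply not_0_INR. lia. }
  assert (Claim1 : forall i, phi (Bp + i)%nat =
                   if Nat.eqb (i mod A) 0 then Cpow z (i / A) else 0).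
  { intros i. unfold phi.
    rewrite (sumz_ext A _ (fun j => Cpow w i * Cpow (Cpow om j) i)).
    2:{ intros j _. unfold K. rewrite Cpow_add_r.
        replace (Cpow (t j) i) with (Cpow w i * Cpow (Cpow om j) i)
          by (unfold t; rewrite Cpow_mult_l; ring).
        pose proof (Ht j) as Htj. revert Htj.
        generalize (Cpow (t j) Bp) (Cpow w i) (Cpow (Cpow om j) i). intros.
        field. auto. }
    rewrite sumz_scal, Hsum.
    destruct (Nat.eqb_spec (i mod A) 0) as [E|E].
    - rewrite (Nat.div_mod_eq i A) at 1. rewrite E, Nat.add_0_r, Cpow_mult_r, Hw.
      field. auto.
    - ring. }
  set (h := fun n => phi n * F n).
  assert (Claim2 : forall k', sumz (S (A * k')) (fun i => h (Bp + i)%nat) =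
                              sumz (S k') (fun i => Cpow z i * F (A * i + Bp)%nat)).
  { induction k' as [|k' IH].
    - rewrite Nat.mul_0_r. simpl sumz. unfold h. rewrite Claim1.
      rewrite Nat.Div0.mod_0_l, Nat.Div0.div_0_l. simpl.
      rewrite Nat.add_0_r, Nat.mul_0_r. simpl. ring.
    - replace (S (A * S k')) with (S (A * k') + A)%nat by lia.
      rewrite sumz_add, IH. cbn [sumz]. f_equal.
      destruct A as [|A0]; [lia|]. cbn [sumz].
      rewrite (sumz_ext A0 _ (fun _ => 0)).
      2:{ intros i Hi. unfold h. rewrite Claim1.
          rewrite <- (Nat.mod_unique (S (S A0 * k') + i) (S A0) k' (S i)) by lia.
          cbn [Nat.eqb]. ring. }
      rewrite sumz_zero. unfold h. rewrite Claim1.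
      rewrite <- (Nat.mod_unique (S (S A0 * k') + A0) (S A0) (S k') 0) by lia.
      rewrite <- (Nat.div_unique (S (S A0 * k') + A0) (S A0) (S k') 0) by lia.
      cbn [Nat.eqb]. replace (Bp + (S (S A0 * k') + A0))%nat with (S A0 * S k' + Bp)%nat by lia. ring. }
  assert (Claim3 : forall k', csum1 (A * k' + Bp) h =
            csum1 (Bp - 1) h + sumz (S (A * k')) (fun i => h (Bp + i)%nat)).
  { intros k'. replace (A * k' + Bp)%nat with (Bp - 1 + S (A * k'))%nat by lia.
    rewrite csum1_add, (csum1_sumz (S (A * k'))). f_equal. apply sumz_ext. intros i _.
    f_equal. lia. }
  assert (HWh : Wmem h).
  { apply (Wmem_ext (fun n => sumz A (fun j => (/ RtoC (INR A) * K j) * Cpow (t j) n * npow n q * P n))).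
    { intros n _. unfold h, phi, F. rewrite <- sumz_scal, sumz_mul_r.
      apply sumz_ext. intros. ring. }
    apply Wmem_sumz. intros j. apply Wmem_mono. apply VtoW. apply Vmem_prod. }
  destruct (sigma_lemma h HWh) as [L HL].
  set (C0 := csum1 (Bp - 1) h).
  exists (map (fun p => (z * fst p, snd p)) L ++ [(- (z * C0), @nil letter)]).
  intros k Hk. rewrite lincomb_app, lincomb_scal, <- HL, HN by auto.
  rewrite Claim3, Claim2. replace (S (k - 1)) with k by lia.
  unfold Ssum. cbv zeta. rewrite csum1_sumz.
  rewrite (sumz_ext k _ (fun i => z * (Cpow z i * F (A * i + Bp)%nat))).
  2:{ intros i _. rewrite HN by lia. replace (S i - 1)%nat with i by lia.
      unfold F, P. rewrite Cpow_S. ring. }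
  rewrite sumz_scal. fold C0. simpl lincomb. ring.
Qed.
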